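(* Let $q\ge2$, $d\ge2$, $P\ge1$ and $n\ge1$ be integers, and let $p$ be the smallest prime with $p\ge\max\{P,q\}$. Set $p_0=(d-1)(q-1)+1$ and $p_i=p$ for $i\in[1,d-2]$. Let $a_0\in[0,p_0-1]$ and $a_i\in[0,p_i-1]$ for $i\in[1,d-2]$, and define $$\mathcal{C}_{q,d,P}=\{\boldsymbol{x}\in\Sigma_q^n:\ \mathrm{VT}^{(i)}(\boldsymbol{x})\equiv a_i\pmod{p_i}\ \text{for all } i\in[0,d-2]\}.$$ Then for any two distinct $\boldsymbol{x},\boldsymbol{y}\in\mathcal{C}_{q,d,P}$, if the difference between the largest and the smallest index at which $\boldsymbol{x}$ and $\boldsymbol{y}$ differ is less than $P$, then $d_H(\boldsymbol{x},\boldsymbol{y})\ge d$. Moreover, there exists a choice of $a_0,\dots,a_{d-2}$ such that $r(\mathcal{C}_{q,d,P})\le(d-2)\log_q(2\max\{P,q\})+\log_q((d-1)(q-1)+1)$.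
   Context: $\Sigma_q=\{0,\dots,q-1\}$; $[i,j]=\{i,\dots,j\}$. For $\boldsymbol{x}\in\Sigma_q^n$, $x[i]$ is its $i$-th entry and $\mathrm{VT}^{(k)}(\boldsymbol{x})=\sum_{i=1}^n i^kx[i]$ (integer). $d_H$ is Hamming distance. Redundancy: $r(\mathcal{C})=n-\log_q|\mathcal{C}|$. *)

(* Defs.v *)
From mathcomp Require Import all_boot.
From Stdlib Require Import Reals.

Set Implicit Arguments.
Unset Strict Implicit.
Unset Printing Implicit Defensive.

(* Words of length n over Sigma_q = {0,..,q-1}; position i : 'I_n is the
   paper's index i+1 (paper indices are 1..n). *)
Definition word (q n : nat) := {ffun 'I_n -> 'I_q}.

Definition VT (q n : nat) (k : nat) (x : word q n) : nat :=
  \sum_(i < n) (i.+1) ^ k * (x i : nat).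

Definition dH (q n : nat) (x y : word q n) : nat := #|[set i | x i != y i]|.

(* largest differing index minus smallest differing index
   (meaningful when x != y; the shift by 1 cancels) *)
Definition diff_span (q n : nat) (x y : word q n) : nat :=
  (\max_(i < n | x i != y i) (i : nat)) - (\big[minn/n]_(i < n | x i != y i) (i : nat)).

Definition modulus (q d p : nat) (i : nat) : nat :=
  if i == 0 then (d - 1) * (q - 1) + 1 else p.

Definition code (q d p n : nat) (a : nat -> nat) : {set word q n} :=
  [set x : word q n | [forall i : 'I_(d - 1),
      VT i x == a i %[mod modulus q d p i]]].

Definition logb (b x : R) : R := (ln x / ln b)%R.

Definition redundancy (q n : nat) (C : {set word q n}) : R :=
  (INR n - logb (INR q) (INR #|C|))%R.

Arguments code : clear implicits.
Arguments redundancy : clear implicits.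

(* Main.v *)
Require Import Defs.
From Stdlib Require Import Reals.
From Stdlib Require Import Lra.
From mathcomp Require Import all_boot.
From mathcomp Require Import all_algebra zify.
Set Implicit Arguments.
Unset Strict Implicit.
Unset Printing Implicit Defensive.
Import GRing.Theory.

Lemma bin_ub m i : 'C(m.+1, i) <= 2 ^ m.
Proof.
elim: m i => [|m IH] [|i] //.
- by case: i.
- by rewrite bin0 expn_gt0.
- rewrite binS expnS mul2n -addnn; exact: leq_add.
Qed.

Lemma binom_odd_ub k : 'C(k.*2.+1, k) <= 4 ^ k.
Proof.
have h := bin_ub k.*2.+1 k.+1.
rewrite binS in h.
have e : 'C(k.*2.+1, k.+1) = 'C(k.*2.+1, k).
  have := @bin_sub k.*2.+1 k; rewrite (_ : k.*2.+1 - k = k.+1); last by lia.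
  by apply; lia.
rewrite e addnn expnS -mul2n leq_mul2l /= in h.
by rewrite (_ : 4 = 2 ^ 2) // -expnM mul2n.
Qed.

Lemma binom_mono m i : i.*2 < m -> 'C(m, i) <= 'C(m, i.+1).
Proof.
move=> h; have e := mul_bin_left m i.
have : i.+1 * 'C(m, i) <= i.+1 * 'C(m, i.+1).
  rewrite e mulnC [X in _ <= X]mulnC leq_mul2l; apply/orP; right; lia.
by rewrite leq_mul2l.
Qed.

Lemma binom_le_central n i : 'C(n.*2, i) <= 'C(n.*2, n).
Proof.
have key : forall k, k <= n -> 'C(n.*2, n - k) <= 'C(n.*2, n).
  elim=> [|k IH] hk; first by rewrite subn0.
  apply: leq_trans (IH (ltnW hk)).
  have -> : n - k = (n - k.+1).+1 by lia.
  apply: binom_mono; lia.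
case: (leqP i n) => hi.
  by have := key (n - i); rewrite (_ : n - (n - i) = i) //; [apply; lia | lia].
case: (leqP i n.*2) => hi2; last by rewrite bin_small.
rewrite -bin_sub //. apply: (leq_trans _ (key (i - n) _)); last by lia.
by rewrite (_ : n - (i - n) = n.*2 - i) //; lia.
Qed.

Lemma central_lb n : 4 ^ n <= n.*2.+1 * 'C(n.*2, n).
Proof.
have e : 4 ^ n = \sum_(i < n.*2.+1) 'C(n.*2, i) * (1 ^ (n.*2 - i) * 1 ^ i).
  by rewrite -expnDn (_ : 4 = 2 ^ 2) // -expnM mul2n.
rewrite e; apply: (@leq_trans (\sum_(i < n.*2.+1) 'C(n.*2, n))).
  apply: leq_sum => i _; rewrite !exp1n !muln1; exact: binom_le_central.
by rewrite sum_nat_const card_ord.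
Qed.

Lemma prime_dvd_fact p m : prime p -> (p %| m`!) = (p <= m).
Proof.
move=> pp; elim: m => [|m IH]; first by rewrite dvdn1; case: p pp => [|[|]].
rewrite factS Euclid_dvdM // IH.
case: (ltngtP p m.+1) => h.
- have -> : p <= m by lia.
  by rewrite orbT.
- have -> : p <= m = false by lia.
  by rewrite orbF gtnNdvd.
- by rewrite h dvdnn.
Qed.

Lemma prod_primes_dvd a b N : 0 < N ->
  (forall p, a <= p < b -> prime p -> p %| N) ->
  \prod_(a <= p < b | prime p) p %| N.
Proof.
move=> N0; elim: b => [|b IH] h.
  by rewrite big_geq.
case: (leqP a b) => hab; last by rewrite big_geq.
rewrite big_mkcond /= big_nat_recr //= -big_mkcond /=.
have IH' : \prod_(a <= p < b | prime p) p %| N.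
  by apply: IH => p /andP[h1 h2]; apply: h; rewrite h1 ltnS ltnW.
case pb: (prime b); last by rewrite muln1.
rewrite Gauss_dvd; first by rewrite IH' h // hab leqnn.
rewrite coprime_sym prime_coprime //; apply/negP => /=.
rewrite (Euclid_dvd_prod _ _ _ pb) big_has_cond => /hasP [c].
rewrite mem_index_iota => /andP[_ hc] /= /andP[pc].
rewrite dvdn_prime2 // => /eqP e; lia.
Qed.

Lemma prim_dvd_binom k :
  \prod_(k.+2 <= p < k.*2.+2 | prime p) p %| 'C(k.*2.+1, k).
Proof.
apply: prod_primes_dvd; first by rewrite bin_gt0; lia.
move=> p /andP[h1 h2] pp.
have e := @bin_fact k.*2.+1 k; rewrite (_ : k.*2.+1 - k = k.+1) in e; last by lia.
have : p %| 'C(k.*2.+1, k) * (k`! * k.+1`!).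
  by rewrite e ?prime_dvd_fact //; lia.
rewrite Gauss_dvdl // prime_coprime // Euclid_dvdM // !prime_dvd_fact //.
by apply/norP; split; apply/negbT; lia.
Qed.

Definition prim m := \prod_(0 <= p < m.+1 | prime p) p.

Lemma primorial m : prim m <= 4 ^ m.
Proof.
elim/ltn_ind: m => m IH.
case: m IH => [|[|[|m]]] IH; rewrite /prim.
- by rewrite unlock.
- by rewrite unlock.
- by rewrite unlock.
case: (boolP (odd m)) => om.
-
  rewrite big_mkcond /= big_nat_recr //= -big_mkcond /=.
  have -> : prime m.+3 = false.
    apply/negbTE; apply/primePn; right; exists 2; first by [].
    by rewrite dvdn2 /= om.
  rewrite muln1; apply: leq_trans (IH m.+2 (ltnSn _)) _.
  by rewrite leq_exp2l.
-
  set k := (m.+2)./2.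
  have ek : m.+3 = k.*2.+1.
    by rewrite /k -[in LHS](odd_double_half m.+2) /= om.
  rewrite ek (big_cat_nat _ (n := k.+2)) //=; last by lia.
  have h1 := IH k.+1 ltac:(lia); rewrite /prim in h1.
  have h0 : 0 < 'C(k.*2.+1, k) by rewrite bin_gt0; lia.
  have h3 := leq_trans (dvdn_leq h0 (prim_dvd_binom k)) (binom_odd_ub k).
  apply: leq_trans (leq_mul h1 h3) _.
  by rewrite -expnD; apply: leq_pexp2l => //; lia.
Qed.

Lemma ltn_expn_self p k : 1 < p -> k < p ^ k.
Proof.
move=> hp; elim: k => [|k IH] //; rewrite expnS.
apply: (@leq_trans (2 * p ^ k)); last by rewrite leq_mul2r hp orbT.
have : 0 < p ^ k by rewrite expn_gt0; lia.
lia.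
Qed.

Lemma logn_fact_wide p m K : prime p -> m < K ->
  logn p m`! = \sum_(1 <= k < K) m %/ p ^ k.
Proof.
move=> pp hK; rewrite logn_fact // (big_cat_nat _ (n := m.+1) (p := K)) //=.
rewrite [X in _ + X]big1_seq ?addn0 // => k /andP[_]; rewrite mem_index_iota => /andP[h1 _].
apply: divn_small; apply: leq_trans (ltn_expn_self k (prime_gt1 pp)) => //; lia.
Qed.

Definition tk p n k := n.*2 %/ p ^ k - (n %/ p ^ k).*2.

Lemma tk_le1 p n k : 0 < p -> tk p n k <= 1.
Proof.
move=> p0; rewrite /tk; set x := p ^ k.
have x0 : 0 < x by rewrite expn_gt0 p0.
have h1 := ltn_ceil n x0.
have : n.*2 %/ x < (n %/ x).*2.+2.
  by rewrite ltn_divLR // -doubleS -doubleMl ltn_double.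
lia.
Qed.

Lemma tk_lower p n k : 0 < p -> (n %/ p ^ k).*2 <= n.*2 %/ p ^ k.
Proof.
move=> p0; set x := p ^ k; have x0 : 0 < x by rewrite expn_gt0 p0.
rewrite leq_divRL // -doubleMl leq_double; exact: leq_divM.
Qed.

Lemma sum_double (r : seq nat) (F : nat -> nat) :
  (\sum_(k <- r) F k).*2 = \sum_(k <- r) (F k).*2.
Proof. by elim: r => [|a r IH]; rewrite ?big_nil // !big_cons doubleD IH. Qed.

Lemma logn_central p n : prime p ->
  logn p 'C(n.*2, n) = \sum_(1 <= k < n.*2.+1) tk p n k.
Proof.
move=> pp.
have e := @bin_fact n.*2 n; rewrite (_ : n.*2 - n = n) in e; last by lia.
have e2 : logn p (n.*2)`! = logn p 'C(n.*2, n) + (logn p n`!).*2.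
  rewrite -e ?lognM ?addnn ?muln_gt0 ?fact_gt0 ?bin_gt0 //; lia.
have e3 : logn p (n.*2)`! = \sum_(1 <= k < n.*2.+1) tk p n k + (\sum_(1 <= k < n.*2.+1) n %/ p ^ k).*2.
  rewrite logn_fact // sum_double -big_split /=.
  apply: eq_bigr => k _; rewrite /tk subnK //; exact: tk_lower (prime_gt0 pp).
rewrite (logn_fact_wide (m := n) (K := n.*2.+1) pp) in e2; last by lia.
by move: e2; rewrite e3 => /eqP; rewrite eqn_add2r => /eqP.
Qed.

Lemma tk_zero p n k : 0 < p -> n.*2 < p ^ k -> tk p n k = 0.
Proof.
move=> p0 h; rewrite /tk divn_small // divn_small //; lia.
Qed.

Lemma central_exp_le p n : prime p -> 0 < n -> p ^ logn p 'C(n.*2, n) <= n.*2.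
Proof.
move=> pp n0; have p1 := prime_gt1 pp.
set T := trunc_log p n.*2.
have hT : p ^ T <= n.*2 by apply: trunc_logP => //; lia.
have hT2 : n.*2 < p ^ T.+1 by apply: trunc_log_ltn.
have Tle : T < n.*2.+1 by have := ltn_expn_self T p1; lia.
suff : logn p 'C(n.*2, n) <= T.
  move=> h; apply: leq_trans hT; exact: leq_pexp2l (prime_gt0 pp) h.
rewrite logn_central // (big_cat_nat _ (n := T.+1)) //=.
rewrite [X in _ + X]big1_seq ?addn0; last first.
  move=> k /andP[_]; rewrite mem_index_iota => /andP[h1 _].
  apply: tk_zero; first exact: prime_gt0.
  apply: leq_trans hT2 _; exact: leq_pexp2l (prime_gt0 pp) h1.
apply: (@leq_trans (\sum_(1 <= k < T.+1) 1)).
  by apply: leq_sum => k _; apply: tk_le1; exact: prime_gt0.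
by rewrite sum_nat_const_nat muln1 subn1.
Qed.

Lemma central_exp_mid p n : prime p -> 4 < n -> p <= n -> n.*2 < 3 * p ->
  logn p 'C(n.*2, n) = 0.
Proof.
move=> pp n4 h1 h2; have p0 := prime_gt0 pp.
have pp2 : n.*2 < p ^ 2 by rewrite expnS expn1; nia.
rewrite logn_central // big1_seq // => k /andP[_]; rewrite mem_index_iota => /andP[k1 _].
case: k k1 => [|[|k]] k1 //.
- rewrite /tk expn1.
  have a1 : n %/ p = 1.
    apply/eqP; rewrite eqn_leq -ltnS ltn_divLR // leq_divRL //; lia.
  have a2 : n.*2 %/ p = 2.
    apply/eqP; rewrite eqn_leq -ltnS ltn_divLR // leq_divRL //; lia.
  by rewrite a1 a2.
- apply: tk_zero => //; apply: leq_trans pp2 _; exact: leq_pexp2l.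
Qed.

Lemma chain (L : seq nat) a : path (fun a b => b <= a.*2) a L -> all prime L ->
  forall n, a <= n < last a L -> exists2 p, prime p & n < p <= n.*2.
Proof.
elim: L a => [|b L IH] a /= => [_ _ n|/andP[hab hp] /andP[pb hL] n hn]; first lia.
case: (ltnP n b) => h.
  exists b => //; rewrite h /=; lia.
apply: (IH b hp hL); lia.
Qed.

Lemma bertrand_small n : 0 < n < 99*100+73 -> exists2 p, prime p & n < p <= n.*2.
Proof.
move=> hn.
have hp : path (fun a b => b <= a.*2) 1 [:: 2;3;5;7;13;23;43;83;163;317;631;1259;2503;50*100+3;99*100+73].
  by vm_compute.
have hall : all prime [:: 2;3;5;7;13;23;43;83;163;317;631;1259;2503;50*100+3;99*100+73].
  by vm_compute.
apply: (chain hp hall); rewrite /=; lia.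
Qed.

Lemma two_pow_ge s : 8 <= s -> 32 * s <= 2 ^ s.
Proof.
elim: s => [|s IH] //; case: (ltngtP s 7) => h hs.
- lia.
- rewrite expnS; have := IH h; lia.
- by rewrite h.
Qed.

Lemma central_prod n : 0 < n ->
  'C(n.*2, n) = \prod_(0 <= p < n.*2.+1) p ^ logn p 'C(n.*2, n).
Proof.
move=> n0; set C := 'C(n.*2, n).
have C0 : 0 < C by rewrite bin_gt0; lia.
rewrite -{1}(partnT C0) (widen_partn _ (m := C + n.*2)) ?leq_addr //.
rewrite (big_cat_nat _ (n := n.*2.+1)) //=; last by lia.
rewrite [X in _ * X]big1_seq ?muln1; last first.
  move=> p /andP[_]; rewrite mem_index_iota => /andP[h1 _].
  case: (posnP (logn p C)) => [->|h] //.
  move: (h); rewrite logn_gt0 mem_primes => /and3P[pp _ _].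
  have := central_exp_le pp n0; rewrite -/C.
  have : p ^ 1 <= p ^ logn p C by apply: leq_pexp2l => //; exact: prime_gt0.
  rewrite expn1; lia.
by apply: eq_bigl.
Qed.

Lemma bertrand_large n : 82 * 100 <= n -> exists2 p, prime p & n < p <= n.*2.
Proof.
move=> hn.
case: (boolP [exists p : 'I_(n.*2.+1), prime p && (n < p)]).
  move/existsP => [p /andP[pp hp]]; exists p => //; rewrite hp /=; have := ltn_ord p; lia.
rewrite negb_exists => /forallP H.
have H' : forall p, prime p -> n < p -> p <= n.*2 -> False.
  move=> p pp h1 h2; have hp : p < n.*2.+1 by lia.
  have := H (Ordinal hp).
  by rewrite /= pp h1.
have n0 : 0 < n by lia.
set C := 'C(n.*2, n).
pose f p := if p * p <= n.*2 then n.*2 else 1.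
pose g p := if prime p && (3 * p <= n.*2) then p else 1.
have hterm : forall p, p < n.*2.+1 -> p ^ logn p C <= f p * g p.
  move=> p hp; rewrite /f /g.
  case pp: (prime p); last first.
    rewrite (_ : logn p C = 0); last by rewrite /logn pp.
    case: ifP => _ /=; lia.
  have hle := central_exp_le pp n0; rewrite -/C in hle.
  have p0 := prime_gt0 pp.
  case: ifP => h1.
    apply: leq_trans hle _; rewrite -[X in X <= _]muln1 leq_mul2l; case: ifP => _; lia.
  have e1 : logn p C <= 1.
    have : p ^ logn p C < p ^ 2 by rewrite expnS expn1; lia.
    by move/(ltn_pexp2l p0).
  case: ifP => /= h3.
    rewrite mul1n; apply: leq_trans (leq_pexp2l p0 e1) _; by rewrite expn1.
  case: (leqP p n) => h4.
    rewrite /C central_exp_mid //; lia.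
  by exfalso; apply: (H' p pp h4); lia.
have hC : C <= \prod_(0 <= p < n.*2.+1) f p * \prod_(0 <= p < n.*2.+1) g p.
  rewrite {1}/C central_prod // -big_split /= big_nat_cond [X in _ <= X]big_nat_cond.
  apply: leq_prod => p /andP[/andP[_ hp] _]; exact: hterm.
set j := trunc_log 4 n.*2.
have hj1 : 4 ^ j <= n.*2 by apply: trunc_logP => //; lia.
have hj2 : n.*2 < 4 ^ j.+1 by apply: trunc_log_ltn.
have hj7 : 7 <= j by apply: trunc_log_max => //; rewrite /= ; lia.
set s := j.+1.
set u := 2 ^ s.
have uu : u * u = 4 ^ s by rewrite -expnD addnn -mul2n expnM.
have hu32 : 32 * s <= u by apply: two_pow_ge; lia.
have hf : \prod_(0 <= p < n.*2.+1) f p <= (n.*2) ^ u.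
  have hu : u <= n.*2.+1.
    have : u <= 4 ^ j by rewrite /u /s -(@expnM 2 2 j) leq_exp2l //; lia.
    lia.
  rewrite (big_cat_nat _ (n := u)) //= [X in _ * X]big1_seq ?muln1; last first.
    move=> p /andP[_]; rewrite mem_index_iota => /andP[h1 _].
    rewrite /f ifF //; apply/negbTE; rewrite -ltnNge.
    apply: leq_trans hj2 _; rewrite -/s -uu; exact: leq_mul.
  apply: (@leq_trans (\prod_(0 <= p < u) n.*2)); last by rewrite prod_nat_const_nat subn0.
  apply: leq_prod => p _; rewrite /f; case: ifP => _; lia.
set w := n.*2 %/ 3.
have hg : \prod_(0 <= p < n.*2.+1) g p <= 4 ^ w.
  have hw : w.+1 <= n.*2.+1 by rewrite ltnS leq_div.
  rewrite (big_cat_nat _ (n := w.+1)) //= [X in _ * X]big1_seq ?muln1; last first.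
    move=> p /andP[_]; rewrite mem_index_iota => /andP[h1 _].
    rewrite /g; case: ifP => // /andP[_ h2].
    have : w.+1 * 3 <= n.*2 by apply: leq_trans h2; rewrite mulnC leq_mul2l.
    by rewrite -leq_divRL // ltnn.
  apply: leq_trans (primorial w); rewrite /prim [X in _ <= X]big_mkcond /=.
  apply: leq_prod => p _; rewrite /g; case pp: (prime p) => //=; case: ifP => // _; exact: prime_gt0.
have hlb := central_lb n; rewrite -/C in hlb.
have h2n : n.*2.+1 <= u * u by rewrite uu.
have hmain : 4 ^ n <= (u * u) * ((u * u) ^ u * 4 ^ w).
  apply: leq_trans hlb _; apply: leq_mul => //.
  apply: leq_trans hC _; apply: leq_mul => //.
  apply: leq_trans hf _; rewrite leq_exp2r ?expn_gt0 //; lia.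
have e4 : forall k, 4 ^ k = 2 ^ (k.*2) by move=> k; rewrite -mul2n expnM.
have e5 : u * u = 2 ^ (s.*2) by rewrite uu e4.
rewrite e5 -expnM !e4 -!expnD leq_exp2l // in hmain.
have hw3 : w * 3 <= n.*2 by exact: leq_divM.
have huu : u * u <= 4 * n.*2 by rewrite uu /s expnS leq_mul2l hj1 orbT.
have h8 : 8 <= s by lia.
nia.
Qed.

Lemma bertrand n : 0 < n -> exists2 p, prime p & n < p <= n.*2.
Proof.
move=> n0; case: (ltnP n (99*100+73)) => h.
  by apply: bertrand_small; rewrite n0 h.
by apply: bertrand_large; lia.
Qed.

Lemma modeq_close a b c m : a = b %[mod m] -> a <= b + c -> b <= a + c -> c < m -> a = b.
Proof.
wlog hab : a b / a <= b.
  move=> W h1 h2 h3 h4; case: (leqP a b) => h; first exact: W.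
  apply/esym; apply: W => //; try lia.
move=> h1 h2 h3 h4.
have dv : m %| b - a by rewrite -eqn_mod_dvd // h1.
case: (posnP (b - a)) => h; first lia.
have := dvdn_leq h dv; lia.
Qed.

Lemma bigmin_le_seq (I : eqType) (r : seq I) (P : pred I) (F : I -> nat) m i0 :
  i0 \in r -> P i0 -> \big[minn/m]_(i <- r | P i) F i <= F i0.
Proof.
elim: r => [|a r IH] //; rewrite inE big_cons => /orP[/eqP <-|h] hP.
  by rewrite hP geq_minl.
case: ifP => _; last exact: IH.
by apply: leq_trans (geq_minr _ _) (IH h hP).
Qed.

Lemma bigmin_le (I : finType) (P : pred I) (F : I -> nat) m i0 :
  P i0 -> \big[minn/m]_(i | P i) F i <= F i0.
Proof. by move=> h; apply: bigmin_le_seq => //; rewrite mem_index_enum. Qed.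

Lemma natpowE m k : PeanoNat.Nat.pow m k = m ^ k.
Proof. by elim: k => [|k IH] //; rewrite expnS -IH. Qed.

Lemma VT0_le q n (u v : word q n) :
  VT 0 u <= VT 0 v + #|[set i | u i != v i]| * (q - 1).
Proof.
rewrite /VT -sum1_card big_distrl /= [X in _ + X]big_mkcond /= -big_split /=.
apply: leq_sum => i _; rewrite !mul1n inE.
case: (u i =P v i) => [->|_] /=; first by rewrite addn0.
have := ltn_ord (u i); lia.
Qed.

Lemma part1 q d P n p (hq : 2 <= q) (hd : 2 <= d) (hP : 1 <= P) (hp : prime p)
  (hpge : maxn P q <= p) a (x y : word q n) :
  x \in code q d p n a -> y \in code q d p n a -> x != y -> diff_span x y < P -> d <= dH x y.
Proof.
rewrite !inE => /forallP hx /forallP hy hxy hspan.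
rewrite leqNgt; apply/negP => hlt.
set S := [set i | x i != y i].
have dHS : dH x y = #|S| by [].
rewrite dHS in hlt.
have hcong : forall k, k < d - 1 -> VT k x = VT k y %[mod modulus q d p k].
  move=> k hk; have := hx (Ordinal hk); have := hy (Ordinal hk).
  by move=> /eqP h1 /eqP h2 /=; rewrite h2 h1.
have hVT0 : VT 0 x = VT 0 y.
  apply: (@modeq_close _ _ (#|S| * (q - 1)) ((d - 1) * (q - 1) + 1)).
  - by have := hcong 0 ltac:(lia); rewrite /modulus.
  - exact: VT0_le.
  - have := VT0_le y x; rewrite (_ : [set i | y i != x i] = S) //.
    by apply/setP => i; rewrite !inE eq_sym.
  - rewrite addn1 ltnS leq_mul2r; apply/orP; right; lia.
pose z (i : 'I_n) := (((i : nat).+1)%:R : 'F_p)%R.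
pose e (i : 'I_n) := ((x i : nat)%:R - (y i : nat)%:R : 'F_p)%R.
have hmom : forall k, k < d - 1 -> (\sum_(i < n) z i ^+ k * e i = 0)%R.
  move=> k hk.
  have hnat : ((VT k x)%:R = (VT k y)%:R :> 'F_p)%R.
    case: k hk => [|k] hk; first by rewrite hVT0.
    have := hcong _ hk; rewrite /modulus /= => h.
    by rewrite -(Fp_nat_mod hp) h Fp_nat_mod.
  have eq : (\sum_(i < n) z i ^+ k * e i = (VT k x)%:R - (VT k y)%:R)%R.
    rewrite /VT !natr_sum -sumrB; apply: eq_bigr => i _.
    by rewrite /z /e -natrX mulrBr -!natrM natpowE.
  by rewrite eq hnat subrr.
have hpoly : forall f : {poly 'F_p}, size f <= d - 1 -> (\sum_(i < n) f.[z i] * e i = 0)%R.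
  move=> f hf.
  under eq_bigr => i _ do rewrite horner_coef mulr_suml.
  rewrite exchange_big /= big1 // => k' _.
  under eq_bigr => i _ do rewrite -mulrA.
  rewrite -mulr_sumr hmom ?mulr0 //; exact: leq_trans (ltn_ord k') hf.
have [j0 hj0] : exists j0, x j0 != y j0.
  case: (pickP (fun i => x i != y i)) => [j0 hj0 | h]; first by exists j0.
  by exfalso; move/eqP: hxy; apply; apply/ffunP => i; move: (h i) => /negbFE/eqP.
have j0S : j0 \in S by rewrite inE.
pose r := enum (S :\ j0).
pose f := (\prod_(c <- map z r) ('X - c%:P) : {poly 'F_p})%R.
have sf : size f = #|S|.
  by rewrite size_prod_XsubC size_map -cardE (cardsD1 j0 S) j0S add1n.
have := hpoly f ltac:(lia).
rewrite (bigD1 j0) //= big1 ?addr0; last first.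
  move=> i hi; case: (boolP (i \in S)) => iS.
    rewrite (_ : f.[z i] = 0)%R ?mul0r //; apply/eqP.
    rewrite -/(root f (z i)) root_prod_XsubC; apply/mapP; exists i => //.
    by rewrite mem_enum in_setD1 hi iS.
  rewrite (_ : e i = 0)%R ?mulr0 //; move: iS; rewrite inE negbK /e => /eqP ->.
  by rewrite subrr.
move/eqP; rewrite mulf_eq0 => /orP[].
  rewrite -/(root f (z j0)) root_prod_XsubC => /mapP [j]; rewrite mem_enum in_setD1.
  move=> /andP[hjj0 jS] hz.
  have hz' : (j0 : nat).+1 %% p = (j : nat).+1 %% p.
    by rewrite -!(val_Fp_nat hp) -/(z j0) -/(z j) hz.
  set mx := \max_(i < n | x i != y i) (i : nat).
  set mn := \big[minn/n]_(i < n | x i != y i) (i : nat).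
  have h1 : (j0 : nat) <= mx by apply: (@leq_bigmax_cond _ _ (fun i : 'I_n => (i : nat))).
  have h2 : (j : nat) <= mx.
    by apply: (@leq_bigmax_cond _ _ (fun i : 'I_n => (i : nat))); rewrite inE in jS.
  have h3 : mn <= j0 by apply: (@bigmin_le _ _ (fun i : 'I_n => (i : nat)) n).
  have h4 : mn <= j.
    by apply: (@bigmin_le _ _ (fun i : 'I_n => (i : nat)) n); rewrite inE in jS.
  have hsp : diff_span x y = mx - mn by [].
  have := modeq_close (c := mx - mn) hz'.
  have hpP : P <= p by move: hpge; rewrite geq_max => /andP[].
  move/eqP: hjj0 => hjj0.
  have : (j0 : nat) <> j by move=> e0; apply: hjj0; apply: val_inj.
  lia.
rewrite /e subr_eq0 => /eqP hxy0.
have hxy1 : (x j0 : nat) %% p = (y j0 : nat) %% p.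
  by rewrite -!(val_Fp_nat hp) hxy0.
have hqp : q <= p by move: hpge; rewrite geq_max => /andP[].
rewrite !modn_small in hxy1; try (apply: leq_trans (ltn_ord _) hqp).
by move: hj0; rewrite (_ : x j0 = y j0) ?eqxx //; apply: val_inj.
Qed.

Lemma leq_exp_base a b k : a <= b -> a ^ k <= b ^ k.
Proof. by move=> h; elim: k => [|k IH] //; rewrite !expnS leq_mul. Qed.

Lemma count_part q d n p (hd : 2 <= d) (hp : 0 < p) :
  exists a : nat -> nat,
    [/\ a 0 < (d - 1) * (q - 1) + 1,
        (forall i, 1 <= i <= d - 2 -> a i < p) &
        q ^ n <= ((d - 1) * (q - 1) + 1) * p ^ (d - 2) * #|code q d p n a| ].
Proof.
set p0 := (d - 1) * (q - 1) + 1.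
have p00 : 0 < p0 by rewrite /p0 addn1.
pose T := ('I_p0 * {ffun 'I_(d - 2) -> 'I_p})%type.
pose r (x : word q n) : T :=
  (Ordinal (ltn_pmod (VT 0 x) p00), [ffun k : 'I_(d - 2) => Ordinal (ltn_pmod (VT (k : nat).+1 x) hp)]).
pose at_ (t : T) (i : nat) : nat :=
  if i is k.+1 then (if insub k is Some o then (t.2 o : nat) else 0) else (t.1 : nat).
have hsub : forall t, [set x | r x == t] \subset code q d p n (at_ t).
  move=> t; apply/subsetP => x; rewrite !inE => /eqP <-{t}.
  apply/forallP => i; rewrite /at_ /modulus.
  case: i => [[|k] hk] /=; first by rewrite modn_mod.
  case: insubP => [o _ ho|]; last by rewrite (_ : k < d - 2); lia.
  by rewrite ffunE /= ho modn_mod.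
have hsum : \sum_(t : T) #|[set x | r x == t]| = q ^ n.
  transitivity (\sum_(t : T) \sum_(x : word q n) (if r x == t then 1 else 0)).
    apply: eq_bigr => t _; rewrite -sum1_card big_mkcond /=.
    by apply: eq_bigr => x _; rewrite inE.
  rewrite exchange_big /=.
  transitivity (\sum_(x : word q n) 1).
    apply: eq_bigr => x _; rewrite (bigD1 (r x)) //= eqxx big1 ?addn0 //.
    by move=> t; rewrite eq_sym => /negbTE ->.
  by rewrite sum1_card card_ffun !card_ord.
have cT : #|{: T}| = p0 * p ^ (d - 2) by rewrite card_prod card_ffun !card_ord.
have T0 : 0 < #|{: T}|.
  apply/card_gt0P; exists (Ordinal p00, [ffun => Ordinal hp]); by [].
have [t0 ht0] := eq_bigmax (fun t : T => #|[set x | r x == t]|) T0.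
exists (at_ t0); split.
- by rewrite /at_ ltn_ord.
- move=> [|k] // /andP[_ hk]; rewrite /at_.
  case: insubP => [o _ ho|] //=; exact: ltn_ord.
- rewrite -cT -hsum.
  apply: (@leq_trans (#|{: T}| * #|[set x | r x == t0]|)); last first.
    by rewrite leq_mul2l subset_leq_card ?orbT // hsub.
  rewrite -ht0 -sum_nat_const; apply: leq_sum => t _.
  exact: (@leq_bigmax _ (fun t : T => #|[set x | r x == t]|)).
Qed.



Section RealPart.
Local Open Scope R_scope.

Lemma ln_le' (x y : R) : 0 < x -> x <= y -> ln x <= ln y.
Proof.
move=> h0 h; case: (Rle_lt_or_eq_dec _ _ h) => h'.
  by apply: Rlt_le; apply: ln_increasing.
by rewrite h'; apply: Rle_refl.
Qed.

Lemma INR_pos k : (0 < k)%N -> 0 < INR k.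
Proof. by move=> h; apply: lt_0_INR; apply/ltP. Qed.

Lemma real_part q n d m p0 c : (2 <= q)%N -> (0 < c)%N -> (0 < p0)%N -> (0 < m)%N ->
  (q ^ n <= p0 * (m.*2) ^ (d - 2) * c)%N ->
  Rle (INR n - logb (INR q) (INR c))
      (Rplus (Rmult (INR (d - 2)) (logb (INR q) (Rmult (INR 2) (INR m))))
             (logb (INR q) (INR p0))).
Proof.
move=> hq hc hp0 hm h.
have hq1 : 1 < INR q by rewrite -[1]/(INR 1); apply: lt_INR; apply/ltP.
have L0 : 0 < ln (INR q) by rewrite -ln_1; apply: ln_increasing; lra.
have hR : INR (q ^ n) <= INR (p0 * (m.*2) ^ (d - 2) * c) by apply: le_INR; apply/leP.
rewrite -!natpowE !mult_INR !pow_INR -mul2n mult_INR in hR.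
have h2m : 0 < INR 2 * INR m by apply: Rmult_lt_0_compat; apply: INR_pos.
have hp0' := INR_pos hp0.
have hc' := INR_pos hc.
have key : INR n * ln (INR q) <= ln (INR p0) + INR (d - 2) * ln (INR 2 * INR m) + ln (INR c).
  have hpos : 0 < INR q ^ n by apply: pow_lt; lra.
  have hh := ln_le' hpos hR.
  rewrite ln_pow in hh; last lra.
  rewrite ln_mult // in hh; last by apply: Rmult_lt_0_compat => //; apply: pow_lt.
  rewrite ln_mult // in hh; last by apply: pow_lt.
  by rewrite ln_pow // in hh.
rewrite /logb; move: L0 key; set L := ln (INR q); clearbody L => L0 key.
apply (Rmult_le_reg_r L _ _ L0).
have e1 : (INR n - ln (INR c) / L) * L = INR n * L - ln (INR c) by field; lra.
have e2 : (INR (d - 2) * (ln (INR 2 * INR m) / L) + ln (INR p0) / L) * L =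
           INR (d - 2) * ln (INR 2 * INR m) + ln (INR p0) by field; lra.
rewrite e1 e2; lra.
Qed.
End RealPart.

Theorem theorem7 (q d P n p : nat)
  (hq : 2 <= q) (hd : 2 <= d) (hP : 1 <= P) (hn : 1 <= n)
  (hp : prime p) (hpge : maxn P q <= p)
  (hpmin : forall p' : nat, prime p' -> maxn P q <= p' -> p <= p') :
  (forall a : nat -> nat,
     a 0 < (d - 1) * (q - 1) + 1 ->
     (forall i, 1 <= i <= d - 2 -> a i < p) ->
     forall x y : word q n,
       x \in code q d p n a -> y \in code q d p n a -> x != y ->
       diff_span x y < P -> d <= dH x y)
  /\
  (exists a : nat -> nat,
     [/\ a 0 < (d - 1) * (q - 1) + 1,
         (forall i, 1 <= i <= d - 2 -> a i < p),
         0 < #|code q d p n a| &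
         Rle (redundancy q n (code q d p n a))
            (Rplus (Rmult (INR (d - 2)) (logb (INR q) (Rmult (INR 2) (INR (maxn P q)))))
                   (logb (INR q) (INR ((d - 1) * (q - 1) + 1))))]).
Proof.
split.
  move=> a _ _ x y hx hy hxy hs.
  exact: (part1 hq hd hP hp hpge hx hy hxy hs).
have m2 : 0 < maxn P q by rewrite leq_max hP.
have [r pr /andP[hr1 hr2]] := bertrand m2.
have hpr : p <= (maxn P q).*2 := leq_trans (hpmin r pr (ltnW hr1)) hr2.
have [a [h0 h1 h2]] := count_part q n hd (prime_gt0 hp).
have qn0 : 0 < q ^ n by rewrite expn_gt0; lia.
have c0 : 0 < #|code q d p n a|.
  case: (posnP #|code q d p n a|) => // e; move: h2; rewrite e muln0; lia.
exists a; split => //.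
rewrite /redundancy; apply: real_part => //; first by rewrite addn1.
apply: leq_trans h2 _; rewrite leq_mul2r; apply/orP; right.
rewrite leq_mul2l; apply/orP; right; exact: leq_exp_base.
Qed.
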